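(* Let $K$ be a finite field of odd characteristic $p$ and order $q$, let $s$ be a positive integer with $\gcd(s,q-1)=1$, and for $u\in K^\times$ let $\Phi_u=W_u-W_{-u}$ and $\Omega_u=W_u+W_{-u}$. Then (i) $\sum_{u\in K^\times}\Phi_u=0$; (ii) $\sum_{u\in K^\times}\Phi_u^2=2q^2$; (iii) $\sum_{u\in K^\times}\Phi_u^2\Omega_u=2q^2(V_1-V_{-1})$; (iv) $\sum_{u\in K^\times}\Phi_u^4=q^2\sum_{u\in K^\times}(V_u+V_{-u}-2U_u)^2$.
   Context: $\zeta=\exp(2\pi i/p)$, $\psi(x)=\zeta^{\mathrm{Tr}(x)}$ with $\mathrm{Tr}$ the absolute trace of $K$ to $\mathbb{F}_p$; $W_u=\sum_{x\in K}\psi(x^s-ux)$. Let $1/s$ denote the inverse of $s$ modulo $q-1$. For $t=(t_1,t_2)\in(K^\times)^2$ and $a,b\in K$, $Q^t_{a,b}$ is the number of $(v_1,v_2)\in K^2$ with $t_1v_1+t_2v_2=a$ and $(v_1^s+v_2^s)^{1/s}=b$. For $u\in K^\times$, $V_u=Q^{(1,1)}_{1,u}-Q^{(1,1)}_{1,0}$ and $U_u=Q^{(1,-1)}_{1,u}-Q^{(1,-1)}_{1,0}$. *)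

(* Defs.v *)
From mathcomp Require Import all_boot all_algebra all_field.
From mathcomp Require Import reals trigo.
From mathcomp Require Import complex.
Import GRing.Theory Num.Theory.
Set Implicit Arguments. Unset Strict Implicit. Unset Printing Implicit Defensive.
Local Open Scope ring_scope.

Section Defs.
Variables (R : realType) (K : finFieldType) (p s : nat).

Definition zeta : R[i] := Complex (cos (2 * pi / p%:R)) (sin (2 * pi / p%:R)).

(* absolute trace K -> F_p, as an element of K: Tr(x) = sum_{i<n} x^(p^i), q = p^n *)
Definition absTr (x : K) : K := \sum_(i < logn p #|K|) x ^+ (p ^ i).

Definition absTr_nat (x : K) : nat :=
  odflt 0%N (omap (@nat_of_ord p) [pick k : 'I_p | (k%:R : K) == absTr x]).

Definition psi (x : K) : R[i] := zeta ^+ absTr_nat x.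

Definition W (u : K) : R[i] := \sum_(x : K) psi (x ^+ s - u * x).

Definition Phi (u : K) : R[i] := W u - W (- u).
Definition Omega (u : K) : R[i] := W u + W (- u).

Definition sinv : nat :=
  odflt 0%N (omap (@nat_of_ord #|K|.-1)
    [pick t : 'I_(#|K|.-1) | (s * t == 1 %[mod #|K|.-1])%N]).

Definition sroot (y : K) : K := y ^+ sinv.

Definition Q (t1 t2 a b : K) : nat :=
  #|[set v : K * K | (t1 * v.1 + t2 * v.2 == a)
                     && (sroot (v.1 ^+ s + v.2 ^+ s) == b)]|.

Definition V (u : K) : int := (Q 1 1 1 u)%:Z - (Q 1 1 1 0)%:Z.
Definition U (u : K) : int := (Q 1 (-1) 1 u)%:Z - (Q 1 (-1) 1 0)%:Z.

End Defs.

(* Main.v *)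
Require Import Defs.
From mathcomp Require Import all_boot all_algebra all_field.
From mathcomp Require Import reals trigo.
From mathcomp Require Import complex.
From mathcomp Require Import zify ring.
Import GRing.Theory Num.Theory.
Set Implicit Arguments. Unset Strict Implicit. Unset Printing Implicit Defensive.
Local Open Scope ring_scope.

Section Main.
Variables (R : realType) (K : finFieldType) (p s : nat).
Hypotheses (hp : p \in [pchar K]) (hodd : odd p)
  (hs : (0 < s)%N) (hcop : coprime s #|K|.-1).

Let pr_p : prime p. Proof. exact: pcharf_prime hp. Qed.
Let n := logn p #|K|.
Lemma cardK : #|K| = (p ^ n)%N.
Proof. exact: (card_pprimeChar hp). Qed.

Lemma p_gt2 : (2 < p)%N.
Proof. have := prime_gt1 pr_p; case: p hodd => [|[|[|]]] //. Qed.

Lemma n_gt0 : (0 < n)%N.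
Proof.
case E: n => //; have := cardK; rewrite E expn0 => h.
have : (1 < #|K|)%N by apply/card_gt1P; exists 0, 1; rewrite eq_sym oner_neq0.
by rewrite h.
Qed.

Lemma q_odd : odd #|K|.
Proof. by rewrite cardK oddX hodd orbT. Qed.

Lemma q_gt2 : (2 < #|K|)%N.
Proof.
rewrite cardK; have := p_gt2; have := n_gt0; case: n => // k _ h.
rewrite expnS; apply: (leq_trans h); apply: leq_pmulr; by rewrite expn_gt0 (prime_gt0 pr_p).
Qed.

Lemma s_odd : odd s.
Proof.
rewrite -coprimen2; apply: coprime_dvdr hcop.
have := q_odd; have := q_gt2; case: #|K| => // k _ /= ok.
by rewrite dvdn2 ok.
Qed.

Let m := #|K|.-1.
Lemma m_gt1 : (1 < m)%N.
Proof. by rewrite /m; have := q_gt2; case: #|K| => [|[|]]. Qed.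

Lemma sinv_ex : exists t : 'I_m, (s * t == 1 %[mod m])%N.
Proof.
have m0 : (0 < m)%N by have := m_gt1; case: m.
have [a am] := Bezoutl s m0.
rewrite gcdnC (eqnP hcop) => /dvdnP[k hk].
have hm := m_gt1.
exists (Ordinal (ltn_pmod ((m.-1) * a) m0)) => /=.
apply/eqP; rewrite modnMmr.
have -> : (s * (m.-1 * a) = (k * m) * m.-1 - m.-1)%N.
  by rewrite -hk; case: (m) hm => // m' _ /=; nia.
have k0 : (0 < k)%N by case: k hk => //; rewrite mul0n addnC.
have -> : (k * m * m.-1 - m.-1 = (k * m.-1).-1 * m + 1)%N.
  case: (m) hm => [|[|m']] // _ /=; case: k k0 {hk} => // k' _.
  have -> : (k'.+1 * m'.+1 = (k' * m'.+1 + m').+1)%N by rewrite mulSn; lia.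
  rewrite /=; nia.
by rewrite modnMDl.
Qed.

Lemma sinvP : (s * sinv K s == 1 %[mod m])%N.
Proof.
rewrite /sinv; case: pickP => [t /= -> //|/= h].
by have [t ht] := sinv_ex; move: (h t); rewrite ht.
Qed.

Lemma expsK (y : K) : y ^+ (s * sinv K s) = y.
Proof.
have hm := m_gt1.
have e : (s * sinv K s = (s * sinv K s) %/ m * m + 1)%N.
  by rewrite {1}(divn_eq (s * sinv K s) m) (eqP sinvP) modn_small.
have [->|y0] := eqVneq y 0; first by rewrite e addn1 expr0n.
have ym : y ^+ m = 1.
  have := expf_card y; rewrite /m; case: #|K| hm => // q' _ /=.
  by rewrite exprSr => /(congr1 (fun z => z / y)); rewrite mulfK // divff.
by rewrite e exprD mulnC exprM ym expr1n mul1r expr1.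
Qed.

Lemma srootK (y : K) : (sroot s y) ^+ s = y.
Proof. by rewrite /sroot -exprM mulnC expsK. Qed.

Lemma sKroot (y : K) : sroot s (y ^+ s) = y.
Proof. by rewrite /sroot -exprM expsK. Qed.

Lemma exps_inj : injective (fun y : K => y ^+ s).
Proof. by move=> x y /= /(congr1 (sroot s)); rewrite !sKroot. Qed.

Lemma sroot_eq0 (y : K) : (sroot s y == 0) = (y == 0).
Proof.
apply/eqP/eqP => [h|->]; first by rewrite -(srootK y) h expr0n gtn_eqF.
by have := sKroot 0; rewrite expr0n gtn_eqF.
Qed.

Lemma expsN (y : K) : (- y) ^+ s = - y ^+ s.
Proof. by rewrite exprNn -signr_odd s_odd expr1 mulN1r. Qed.

Local Notation Tr := (@absTr K p).

Lemma pnat_pow i : [pchar K].-nat (p ^ i)%N.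
Proof. by rewrite pnatX pnatE // hp. Qed.

Lemma TrD x y : Tr (x + y) = Tr x + Tr y.
Proof.
rewrite /absTr -big_split /=; apply: eq_bigr => i _.
by rewrite exprDn_pchar // pnat_pow.
Qed.

Lemma pow_pn (x : K) i : (x ^+ p) ^+ (p ^ i) = x ^+ (p ^ i.+1).
Proof. by rewrite -exprM expnS. Qed.

Lemma Tr_p x : Tr x ^+ p = Tr x.
Proof.
rewrite /absTr -(pFrobenius_autE hp) rmorph_sum /=.
under eq_bigr => i _ do rewrite pFrobenius_autE -exprM -expnSr.
move: cardK n_gt0; rewrite -/n; case: n => // k e _.
rewrite big_ord_recr [RHS]big_ord_recl /= -e expf_card expn0 expr1 addrC.
by congr (_ + _); apply: eq_bigr => i _.
Qed.

Lemma fix_pow (c : K) i : c ^+ p = c -> c ^+ (p ^ i) = c.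
Proof.
move=> hc; elim: i => [|i IH]; first by rewrite expn0 expr1.
by rewrite expnS exprM hc.
Qed.

Lemma TrZ c x : c ^+ p = c -> Tr (c * x) = c * Tr x.
Proof.
move=> hc; rewrite /absTr mulr_sumr; apply: eq_bigr => i _.
by rewrite exprMn (fix_pow _ hc).
Qed.

Lemma natK_inj (i j : nat) : (i < p)%N -> (j < p)%N -> (i%:R == j%:R :> K) = (i == j).
Proof.
move=> ip jp; apply/eqP/eqP => [|->] //.
wlog ij : i j ip jp / (i <= j)%N.
  by move=> H e; case/orP: (leq_total i j) => h; [|apply/esym]; apply: H.
move/eqP; rewrite eq_sym -subr_eq0 -natrB // -(dvdn_pcharf hp) => h.
have : (j - i < p)%N by apply: leq_ltn_trans (leq_subr _ _) jp.
have : (j - i == 0)%N -> i = j by rewrite subn_eq0 => h2; apply/eqP; rewrite eqn_leq ij h2.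
case: (j - i)%N h => [_ /(_ isT) //|k h _ h2].
by have := dvdn_leq (ltn0Sn k) h; rewrite leqNgt h2.
Qed.

Lemma primefield (y : K) : y ^+ p = y -> exists k : 'I_p, (k : nat)%:R = y.
Proof.
move=> hy; have [/existsP[k /eqP e]|/existsPn hn] := boolP [exists k : 'I_p, (k : nat)%:R == y].
  by exists k.
exfalso.
pose P : {poly K} := 'X^p - 'X.
have sP : size P = p.+1.
  by rewrite /P size_polyDl size_polyXn // size_polyN size_polyX ltnS prime_gt1.
have P0 : P != 0 by rewrite -size_poly_eq0 sP.
pose rs := y :: [seq (val k)%:R | k <- enum 'I_p].
have := @max_poly_roots _ P rs P0.
have -> : all (root P) rs.
  rewrite /= rootE /P !hornerE hy subrr eqxx /=; apply/allP => z /mapP[k _ ->].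
  by rewrite rootE !hornerE -(pFrobenius_autE hp) pFrobenius_aut_nat subrr.
have -> : uniq rs.
  rewrite /= map_inj_uniq ?enum_uniq ?andbT.
    by apply/mapP => -[k _ e]; have := hn k; rewrite e eqxx.
  by move=> i j /eqP; rewrite natK_inj // => /eqP/val_inj.
by rewrite /= size_map size_enum_ord sP ltnn => /(_ isT isT).
Qed.

Lemma absTr_natP x : ((absTr_nat p x)%:R = Tr x) /\ (absTr_nat p x < p)%N.
Proof.
rewrite /absTr_nat; case: pickP => [k /= /eqP -> //|/= h].
by have [k hk] := primefield (Tr_p x); move: (h k); rewrite hk eqxx.
Qed.

Lemma absTr_nat_eq x (k : nat) : (k < p)%N -> k%:R = Tr x -> absTr_nat p x = k.
Proof.
move=> kp e; have [e2 lt] := absTr_natP x; apply/eqP.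
by rewrite -natK_inj // e e2.
Qed.

Lemma Tr0 : Tr 0 = 0.
Proof. have h := TrD 0 0; rewrite addr0 in h; by apply: (addrI (Tr 0)); rewrite -h addr0. Qed.

Lemma Tr_nontriv : exists a : K, Tr a = 1.
Proof.
have [/existsP[a ha]|/existsPn hn] := boolP [exists a : K, Tr a != 0].
  have hc : (Tr a)^-1 ^+ p = (Tr a)^-1 by rewrite exprVn Tr_p.
  by exists ((Tr a)^-1 * a); rewrite TrZ // mulVf.
exfalso.
pose P : {poly K} := \sum_(i < n) 'X^(p ^ i).
have hP x : P.[x] = Tr x by rewrite /P horner_sum; apply: eq_bigr => i _; rewrite hornerXn.
have c1 : P`_1 = 1.
  rewrite /P coef_sum; move: n_gt0; rewrite -/n; case: n => // k _.
  rewrite big_ord_recl /= coefXn expn0 eqxx big1 ?addr0 // => i _.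
  have h1 : (1 < p ^ (bump 0 i))%N.
    by rewrite -[X in (X < _)%N](expn0 p) ltn_exp2l ?prime_gt1.
  by rewrite coefXn ltn_eqF.
have P0 : P != 0 by apply/eqP => e; move: c1; rewrite e coef0 => /eqP; rewrite eq_sym oner_eq0.
have sP : (size P <= #|K|)%N.
  apply: leq_trans (size_sum _ _ _) _; apply/bigmax_leqP => i _.
  by rewrite size_polyXn cardK ltn_exp2l // prime_gt1.
have := @max_poly_roots _ P (enum K) P0.
have -> : all (root P) (enum K).
  by apply/allP => x _; rewrite rootE hP; have := hn x; rewrite negbK.
by rewrite enum_uniq -cardE ltnNge sP => /(_ isT isT).
Qed.

Local Notation C := (R[i]).
Let th : R := 2 * pi / p%:R.
Local Notation z := (zeta R p).

Lemma zetaX k : z ^+ k = Complex (cos (th *+ k)) (sin (th *+ k)).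
Proof.
elim: k => [|k IH]; first by rewrite expr0 !mulr0n cos0 sin0.
rewrite exprS IH mulrS cosD sinD.
rewrite /zeta -/th.
apply/eqP; rewrite eq_complex /=; apply/andP; split; apply/eqP => //.
by rewrite addrC.
Qed.

Lemma zeta_p : z ^+ p = 1.
Proof.
rewrite zetaX /th -!(mulr_natr (2 * pi / p%:R)) mulfVK ?pnatr_eq0 -?lt0n ?prime_gt0 //.
by rewrite mulr_natl cos2pi sin2pi.
Qed.

Lemma zeta_neq1 : z != 1.
Proof.
apply/eqP => /(congr1 (@complex.Im R)) /= /eqP; apply/negP; apply: lt0r_neq0.
have h2 : (0:R) < 2 * pi by apply: mulr_gt0; [rewrite ltr0n|exact: pi_gt0].
have hp0 : (0:R) < p%:R by rewrite ltr0n prime_gt0.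
apply: sin_gt0_pi; rewrite /th divr_gt0 //= ltr_pdivrMr //.
rewrite [pi * _]mulrC ltr_pM2r ?pi_gt0 // ltr_nat; exact: p_gt2.
Qed.


Local Notation ps := (@psi R K p).
Local Notation Wf := (@W R K p s).
Local Notation q := #|K|.

Lemma psiD x y : ps (x + y) = ps x * ps y.
Proof.
rewrite /psi -exprD -[in RHS](expr_mod _ zeta_p); congr (_ ^+ _).
have [e1 _] := absTr_natP x; have [e2 _] := absTr_natP y.
apply: absTr_nat_eq; first by rewrite ltn_mod prime_gt0.
by rewrite (GRing.natr_mod_pchar hp) natrD e1 e2 TrD.
Qed.

Lemma psi0 : ps 0 = 1.
Proof. by rewrite /psi (@absTr_nat_eq 0 0) ?prime_gt0 ?Tr0. Qed.

Lemma sum_psi : \sum_(x : K) ps x = 0.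
Proof.
have [a ha] := Tr_nontriv.
have pa : ps a = z by rewrite /psi (@absTr_nat_eq a 1) ?prime_gt1 ?ha ?expr1.
set S := \sum_x _.
have : ps a * S = S.
  rewrite /S mulr_sumr [RHS](reindex_inj (addrI a)) /=.
  by apply: eq_bigr => x _; rewrite psiD.
move/eqP; rewrite -subr_eq0 -{2}[S]mul1r -mulrBl mulf_eq0 subr_eq0 pa.
by rewrite (negbTE zeta_neq1) => /eqP.
Qed.

Lemma sum_psiM c : \sum_(x : K) ps (c * x) = if c == 0 then q%:R else 0.
Proof.
have [->|c0] := eqVneq c 0.
  by under eq_bigr => x _ do rewrite mul0r psi0; rewrite sumr_const -mulr_natl mulr1.
by rewrite -[RHS]sum_psi [RHS](reindex_inj (mulfI c0)).
Qed.

Lemma sum_psi_pow c : \sum_(x : K) ps (c * x ^+ s) = if c == 0 then q%:R else 0.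
Proof. by rewrite -sum_psiM [RHS](reindex_inj exps_inj). Qed.

Lemma W0 : Wf 0 = 0.
Proof.
rewrite /W; under eq_bigr => x _ do rewrite mul0r subr0 -[x ^+ s]mul1r.
by rewrite sum_psi_pow oner_eq0.
Qed.

Lemma Wmul u v : Wf u * Wf v =
  \sum_(x : K) \sum_(y : K) ps (x ^+ s + y ^+ s) * ps (- (u * x + v * y)).
Proof.
rewrite /W mulr_suml; apply: eq_bigr => x _; rewrite mulr_sumr.
by apply: eq_bigr => y _; rewrite -!psiD; congr ps; ring.
Qed.

Lemma WmulU a b u : Wf (a * u) * Wf (b * u) =
  \sum_(x : K) \sum_(y : K) ps (x ^+ s + y ^+ s) * ps ((- (a * x + b * y)) * u).
Proof.
rewrite Wmul; apply: eq_bigr => x _; apply: eq_bigr => y _; congr (_ * ps _); ring.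
Qed.

Lemma sum_ind (F : K -> C) y0 c :
  \sum_(y : K) F y * (if y == y0 then c else 0) = F y0 * c.
Proof.
rewrite (bigD1 y0) //= eqxx big1 ?addr0 // => y /negbTE ->; exact: mulr0.
Qed.

Lemma div_eq1 (a b : K) : b != 0 -> (a / b == 1) = (a == b).
Proof.
by move=> b0; apply/eqP/eqP => [h|->]; [rewrite -(divfK b0 a) h mul1r|rewrite divff].
Qed.

Lemma sumWW a b : \sum_(u : K) Wf (a * u) * Wf (b * u) =
  if (a == b) && (b != 0) then (q ^ 2)%:R else 0.
Proof.
have [->|b0] := eqVneq b 0.
  by rewrite andbF big1 // => u _; rewrite mul0r W0 mulr0.
rewrite andbT.
transitivity (\sum_(x : K) ps ((1 - (a / b) ^+ s) * x ^+ s) * q%:R).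
  under eq_bigr => u _ do rewrite WmulU.
  rewrite exchange_big /=; apply: eq_bigr => x _.
  rewrite exchange_big /=.
  under eq_bigr => y _ do rewrite -mulr_sumr sum_psiM.
  have e y : (- (a * x + b * y) == 0) = (y == - (a * x) / b).
    apply/eqP/eqP => [h|->]; last by field.
    have hy : b * y = - (a * x) by rewrite -[LHS]addr0 -h; ring.
    by rewrite -hy; field.
  under eq_bigr => y _ do rewrite e.
  rewrite sum_ind; congr (ps _ * _).
  rewrite mulNr expsN mulrAC exprMn; ring.
rewrite -mulr_suml sum_psi_pow subr_eq0 eq_sym.
rewrite -{1}(expr1n K s) (inj_eq exps_inj) div_eq1 //.
by case: (a == b); rewrite ?mul0r // -natrM mulnn.
Qed.

Definition rr (e v : K) := sroot s (v ^+ s + (e * (1 - v)) ^+ s).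

Lemma inner_sum u r : u != 0 ->
  \sum_(a : K | a != 0) ps ((a * r) ^+ s - u * a) = Wf (u / r) - 1.
Proof.
move=> u0.
have full : \sum_(a : K) ps ((a * r) ^+ s - u * a) = Wf (u / r).
  have [->|r0] := eqVneq r 0.
    rewrite invr0 mulr0 W0.
    under eq_bigr => a _ do rewrite mulr0 expr0n gtn_eqF // sub0r -mulNr.
    by rewrite sum_psiM oppr_eq0 (negbTE u0).
  rewrite /W [RHS](reindex_inj (mulIf r0)) /=; apply: eq_bigr => a _.
  by congr (ps (_ - _)); field.
rewrite -full [X in _ = X - 1](bigD1 0) //= mul0r expr0n gtn_eqF // mulr0 subr0 psi0.
by rewrite addrC addrK.
Qed.

Lemma WT (e u : K) : e * e = 1 -> u != 0 ->
  Wf u * Wf (e * u) = \sum_(x : K) ps (x ^+ s + (- (e * x)) ^+ s) - q%:R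
                      + \sum_(v : K) Wf (u / rr e v).
Proof.
move=> ee u0.
have e0 : e != 0 by apply/eqP => e0; move: ee; rewrite e0 mul0r => /eqP; rewrite eq_sym oner_eq0.
rewrite Wmul.
have hinj x : injective (fun a : K => e * (a - x)).
  by move=> a1 a2 /= /(mulfI e0) /addIr.
transitivity (\sum_(a : K) ps (- (u * a)) *
              \sum_(x : K) ps (x ^+ s + (e * (a - x)) ^+ s)).
  under eq_bigr => x _ do rewrite (reindex_inj (hinj x)) /=.
  rewrite exchange_big /=; apply: eq_bigr => a _; rewrite mulr_sumr.
  apply: eq_bigr => x _; rewrite mulrC; congr (_ * ps _).
  congr ps; transitivity (- (u * x + (e * e) * u * (a - x))); first by congr (- _); ring.
  by rewrite ee; ring.
rewrite (bigD1 0) //= mulr0 oppr0 psi0 mul1r.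
under eq_bigr => x _ do rewrite sub0r mulrN.
rewrite -addrA; congr (_ + _).
transitivity (\sum_(v : K) (Wf (u / rr e v) - 1)); last first.
  by rewrite sumrB sumr_const -mulr_natl mulr1 addrC.
transitivity (\sum_(v : K) \sum_(a : K | a != 0) ps ((a * rr e v) ^+ s - u * a)); last first.
  by apply: eq_bigr => v _; rewrite inner_sum.
rewrite exchange_big /=; apply: eq_bigr => a a0; rewrite mulr_sumr.
rewrite (reindex_inj (mulfI a0)) /=; apply: eq_bigr => v _.
rewrite mulrC -psiD; congr ps.
rewrite [in RHS]exprMn /rr srootK (_ : e * (a - a * v) = a * (e * (1 - v))); last by ring.
rewrite !exprMn; ring.
Qed.

Lemma Qcount e b : e * e = 1 -> Q s 1 e 1 b = #|[set v : K | rr e v == b]|.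
Proof.
move=> ee; rewrite /Q.
have -> : [set v : K * K | (1 * v.1 + e * v.2 == 1) && (sroot s (v.1 ^+ s + v.2 ^+ s) == b)]
  = [set (v, e * (1 - v)) | v in [set v : K | rr e v == b]].
  apply/setP => -[v1 v2]; rewrite !inE /=; apply/andP/imsetP => [[/eqP h1 h2]|[v]].
    have ev : v2 = e * (1 - v1) by rewrite -h1 mul1r addrC addKr mulrA ee mul1r.
    by exists v1; rewrite ?inE /rr -?ev.
  rewrite inE /rr => /eqP hv [-> ->] /=; split; last by rewrite hv.
  by rewrite mulrA ee !mul1r addrC subrK.
by rewrite card_imset // => x y [].
Qed.

Lemma sum_rr e (f : K -> C) :
  \sum_(v : K) f (rr e v) = \sum_(b : K) #|[set v : K | rr e v == b]|%:R * f b.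
Proof.
rewrite (partition_big (rr e) xpredT) //=; apply: eq_bigr => b _.
rewrite (eq_bigr (fun _ => f b)); last by move=> v /eqP ->.
rewrite (eq_bigl (mem [set v : K | rr e v == b])) ?sumr_const ?mulr_natl //.
by move=> v /=; rewrite inE.
Qed.

Lemma two_neq0 : (2 : K) != 0.
Proof.
apply/negP; rewrite -[2]/(2%:R) -(dvdn_pcharf hp) => /dvdn_leq h.
by have := h isT; rewrite leqNgt p_gt2.
Qed.

Lemma T1 u : Wf u ^+ 2 = \sum_(b : K) (Q s 1 1 1 b)%:R * Wf (u / b).
Proof.
have [->|u0] := eqVneq u 0.
  by rewrite W0 expr0n /= big1 // => b _; rewrite mul0r W0 mulr0.
rewrite expr2 -{2}[u]mul1r WT ?mulr1 //.
under eq_bigr => x _ do rewrite mul1r expsN subrr psi0.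
rewrite sumr_const -mulr_natl mulr1 subrr add0r (sum_rr 1 (fun b => Wf (u / b))).
by apply: eq_bigr => b _; rewrite Qcount ?mulr1.
Qed.

Lemma T2 u : u != 0 ->
  Wf u * Wf (- u) = - q%:R + \sum_(b : K) (Q s 1 (-1) 1 b)%:R * Wf (u / b).
Proof.
move=> u0; rewrite -[- u]mulN1r WT ?mulrNN ?mulr1 //.
under eq_bigr => x _ do rewrite mulN1r opprK -[x ^+ s + x ^+ s]mulr2n -mulr_natl.
rewrite sum_psi_pow (negbTE two_neq0) sub0r (sum_rr (-1) (fun b => Wf (u / b))).
by congr (_ + _); apply: eq_bigr => b _; rewrite Qcount ?mulrNN ?mulr1.
Qed.

Lemma Q1_0 : Q s 1 1 1 (0 : K) = 0%N.
Proof.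
rewrite Qcount ?mulr1 //; apply/eqP; rewrite cards_eq0; apply/eqP/setP => v.
rewrite !inE /rr sroot_eq0 mul1r addr_eq0 -expsN opprB (inj_eq exps_inj).
by apply/negP => /eqP/(congr1 (fun x => v - x)); rewrite subrr opprB addrC subrK => /eqP; rewrite eq_sym oner_eq0.
Qed.

Lemma Q2_0 : Q s 1 (-1) 1 (0 : K) = 1%N.
Proof.
rewrite Qcount ?mulrNN ?mulr1 //.
have -> : [set v : K | rr (-1) v == 0] = [set 2^-1].
  apply/setP => v; rewrite !inE /rr sroot_eq0 mulN1r expsN subr_eq0 (inj_eq exps_inj).
  apply/eqP/eqP => [h|->].
    have h2 : v + v = 1 by rewrite {2}h addrC subrK.
    by apply: (mulfI two_neq0); rewrite divff ?two_neq0 // -[RHS]h2; ring.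
  by apply: (mulfI two_neq0); rewrite mulrBr mulr1 divff ?two_neq0 // -[2]/(1 + 1) addrK.
by rewrite cards1.
Qed.

Local Notation Ph := (@Phi R K p s).
Local Notation Om := (@Omega R K p s).

Lemma sum_nz (F : K -> C) : F 0 = 0 -> \sum_(u : K | u != 0) F u = \sum_(u : K) F u.
Proof. by move=> F0; rewrite [RHS](bigD1 0) //= F0 add0r. Qed.

Lemma Phi0 : Ph 0 = 0.
Proof. by rewrite /Phi oppr0 subrr. Qed.

Lemma sum_opp (F : K -> C) : \sum_(u : K) F (- u) = \sum_(u : K) F u.
Proof. by rewrite [RHS](reindex_inj oppr_inj). Qed.

Lemma partI : \sum_(u : K | u != 0) Ph u = 0.
Proof. by rewrite sum_nz ?Phi0 // /Phi sumrB sum_opp subrr. Qed.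

Lemma one_neq_m1 : ((1 : K) == -1) = false.
Proof.
apply/negbTE; rewrite -subr_eq0 opprK.
by have := two_neq0; rewrite -[2]/(1 + 1).
Qed.

Lemma partII : \sum_(u : K | u != 0) Ph u ^+ 2 = (2 * q ^ 2)%:R.
Proof.
rewrite sum_nz ?Phi0 ?expr0n //.
transitivity (\sum_(u : K) (Wf (1 * u) * Wf (1 * u) + Wf ((-1) * u) * Wf ((-1) * u)
   - 2%:R * (Wf (1 * u) * Wf ((-1) * u)))).
  by apply: eq_bigr => u _; rewrite mul1r mulN1r /Phi; ring.
rewrite sumrB big_split /= -mulr_sumr !sumWW eqxx oppr_eq0 oner_eq0 one_neq_m1 /=.
by rewrite eqxx mulr0 subr0 natrM mulr_natl mulr2n.
Qed.

Lemma natzR (k : nat) : ((k%:Z)%:~R : C) = k%:R.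
Proof. by []. Qed.

Lemma inv_eq (b g : K) : (b^-1 == g) = (b == g^-1).
Proof. by apply/eqP/eqP => [<-|->]; rewrite invrK. Qed.

Lemma Xsum g : g != 0 ->
  \sum_(u : K) Wf u ^+ 2 * Wf (g * u) = (Q s 1 1 1 g^-1)%:R * (q ^ 2)%:R.
Proof.
move=> g0.
under eq_bigr => u _ do rewrite T1 mulr_suml.
rewrite exchange_big /=.
under eq_bigr => b _ do (under eq_bigr => u _ do rewrite -mulrA (mulrC u); rewrite -mulr_sumr sumWW g0 andbT inv_eq).
by rewrite sum_ind.
Qed.

Lemma partIII : \sum_(u : K | u != 0) Ph u ^+ 2 * Om u
  = (2 * q ^ 2)%:R * ((V s (1 : K) - V s (-1 : K))%:~R : C).
Proof.
rewrite sum_nz ?Phi0 ?expr0n ?mul0r //.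
pose A u := Wf u ^+ 2 * Wf (1 * u) - Wf u ^+ 2 * Wf ((-1) * u).
transitivity (\sum_(u : K) A u + \sum_(u : K) A (- u)).
  rewrite -big_split /=; apply: eq_bigr => u _.
  by rewrite /A !mul1r !mulN1r opprK /Phi /Omega; ring.
rewrite (sum_opp A) /A sumrB !Xsum ?oppr_eq0 ?oner_eq0 // invr1 invrN1.
rewrite /V !intrB !natzR natrM.
by rewrite mulr_natl !mulr2n; ring.
Qed.


Lemma sumW_all u : u != 0 -> \sum_(b : K) Wf (u / b) = q%:R.
Proof.
move=> u0.
have inj : injective (fun b : K => u / b) by move=> b1 b2 /= /(mulfI u0) /invr_inj.
transitivity (\sum_(c : K) Wf c); first by rewrite [RHS](reindex_inj inj).
rewrite /W exchange_big /=.
have hx x c : ps (x ^+ s - c * x) = ps (x ^+ s) * ps ((- x) * c).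
  by rewrite -psiD; congr ps; ring.
under eq_bigr => x _ do (under eq_bigr => c _ do rewrite hx).
under eq_bigr => x _ do rewrite -mulr_sumr sum_psiM oppr_eq0.
by rewrite sum_ind expr0n gtn_eqF // psi0 mul1r.
Qed.

Definition G (b : K) : int := V s b + V s (- b) - 2 * U s b.

Lemma Phi2 u : Ph u ^+ 2 = \sum_(b : K) (G b)%:~R * Wf (u / b).
Proof.
have [->|u0] := eqVneq u 0.
  by rewrite Phi0 expr0n /= big1 // => b _; rewrite mul0r W0 mulr0.
transitivity (Wf u ^+ 2 + Wf (- u) ^+ 2 - 2 * (Wf u * Wf (- u))).
  by rewrite /Phi; ring.
rewrite T1 (T1 (- u)) T2 //.
rewrite -[\sum_b (Q s 1 1 1 b)%:R * Wf (- u / b)](sum_opp) /=.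
under [X in _ + X - _]eq_bigr => b _ do rewrite invrN mulrNN.
have E b : (G b)%:~R * Wf (u / b) = (Q s 1 1 1 b)%:R * Wf (u / b)
   + (Q s 1 1 1 (- b))%:R * Wf (u / b) + 2 * Wf (u / b)
   - 2 * ((Q s 1 (-1) 1 b)%:R * Wf (u / b)).
  rewrite /G /V /U Q1_0 Q2_0 !intrB !intrD intrM !natzR; ring.
rewrite (eq_bigr _ (fun b _ => E b)) sumrB !big_split /= -!mulr_sumr sumW_all //.
ring.
Qed.

Lemma partIV : \sum_(u : K | u != 0) Ph u ^+ 4 =
  (q ^ 2)%:R * ((\sum_(u : K | u != 0) (V s u + V s (- u) - 2 * U s u) ^+ 2)%:~R : C).
Proof.
rewrite sum_nz ?Phi0 ?expr0n //.
under eq_bigr => u _ do rewrite (_ : 4 = 2 * 2)%N // exprM Phi2 expr2 mulr_suml.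
rewrite exchange_big /=.
under eq_bigr => b _ do (under eq_bigr => u _ do rewrite mulr_sumr; rewrite exchange_big /=).
under eq_bigr => b _ do (under eq_bigr => c _ do
  (under eq_bigr => u _ do rewrite mulrACA (mulrC u) (mulrC u);
   rewrite -mulr_sumr sumWW (inj_eq invr_inj) invr_eq0)).
rewrite rmorph_sum mulr_sumr [RHS]big_mkcond /=; apply: eq_bigr => b _.
rewrite (eq_bigr (fun c => (G b)%:~R * (G c)%:~R * (if c == b then (if b != 0 then (q ^ 2)%:R else 0) else 0))); last first.
  by move=> c _; rewrite eq_sym; case: eqP => // ->.
rewrite sum_ind /G; case: (b != 0); rewrite ?mulr0 //.
by rewrite rmorphXn /= expr2 mulrC.
Qed.
End Main.


Theorem lemma5p20 (R : realType) (K : finFieldType) (p s : nat)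
  (hp : p \in [pchar K]) (hodd : odd p)
  (hs : (0 < s)%N) (hcop : coprime s #|K|.-1) :
  let q := #|K| in
  [/\ \sum_(u : K | u != 0) Phi R p s u = 0,
      \sum_(u : K | u != 0) Phi R p s u ^+ 2 = (2 * q ^ 2)%:R,
      \sum_(u : K | u != 0) Phi R p s u ^+ 2 * Omega R p s u
        = (2 * q ^ 2)%:R * ((V s (1 : K) - V s (-1 : K))%:~R : R[i])
    & \sum_(u : K | u != 0) Phi R p s u ^+ 4
        = (q ^ 2)%:R *
          ((\sum_(u : K | u != 0) (V s u + V s (- u) - 2 * U s u) ^+ 2)%:~R : R[i])].
Proof.
move=> q; split.
- exact: partI.
- exact: (partII R hp hodd hs hcop).
- exact: (partIII R hp hodd hs hcop).
- exact: (partIV R hp hodd hs hcop).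
Qed.
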